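(* For every $j\ge0$, $$\left|\frac{\mathbb E(W_j^+)}{K}-\sum_{\ell\ge j}\mathbb Q_\ell\right|\le \mathbb E\!\left(\min(pv_1,1)\,\frac{v_1}{V}\right).$$
   Context: Uniform urn model. Let $v$ be a random variable with values in the positive integers, let $K\ge 1$, let $v_1,\dots,v_K$ be i.i.d. copies of $v$ and $V=v_1+\dots+v_K$. Fix $p\in(0,1)$, with $pV$ assumed to be an integer. Conditionally on $\mathcal F=\{v_1,\dots,v_K\}$, $pV$ balls are drawn with replacement, independently, each drawn ball having color $i$ with probability $v_i/V$. Let $\tilde v_i$ be the number of drawn balls of color $i$, and for $j\ge0$ let $W_j^+=\sum_{i=1}^K\mathbf 1\{\tilde v_i\ge j\}$. Let $\mathbb Q_j=\mathbb E\big(\frac{(pv)^j}{j!}e^{-pv}\big)$, $j\ge0$. *)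

(* Defs.v *)
From Stdlib Require Import Reals Lra List Arith ClassicalEpsilon.
Open Scope R_scope.

(* Value of a convergent series (sum_{n>=0} u n); 0 if it does not converge. *)
Definition series (u : nat -> R) : R :=
  match excluded_middle_informative (exists l, infinite_sum u l) with
  | left H => proj1_sig (constructive_indefinite_description _ H)
  | right _ => 0
  end.

(* Law of v: pi n = P(v = n); v takes values in the positive integers. *)
Definition is_pos_int_law (pi : nat -> R) : Prop :=
  (forall n, 0 <= pi n) /\ pi 0%nat = 0 /\ infinite_sum pi 1.

(* E f(v_1,...,v_K) for i.i.d. v_i with law pi; f receives [v_1; ...; v_K]. *)
Fixpoint Eiid (pi : nat -> R) (K : nat) (f : list nat -> R) : R :=
  match K with
  | O => f nil
  | S k => series (fun n => pi n * Eiid pi k (fun l => f (n :: l)))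
  end.

Definition sumV (vs : list nat) : nat := fold_right Nat.add 0%nat vs.

(* number of drawn balls pV (pV is assumed to be an integer) *)
Definition ndraws (p : R) (vs : list nat) : nat :=
  Z.to_nat (Int_part (p * INR (sumV vs))).

Fixpoint draw_seqs (K n : nat) : list (list nat) :=
  match n with
  | O => nil :: nil
  | S m => flat_map (fun c => map (cons c) (draw_seqs K m)) (seq 0 K)
  end.

(* probability of a given sequence of independent draws, color i w.p. v_i/V *)
Definition draw_prob (vs : list nat) (s : list nat) : R :=
  fold_right (fun c acc => INR (nth c vs 0%nat) / INR (sumV vs) * acc) 1 s.

Definition vtilde (s : list nat) (i : nat) : nat := count_occ Nat.eq_dec s i.

Definition Wplus (K j : nat) (s : list nat) : nat :=
  length (filter (fun i => Nat.leb j (vtilde s i)) (seq 0 K)).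

Definition condE_Wplus (p : R) (K j : nat) (vs : list nat) : R :=
  fold_right Rplus 0
    (map (fun s => draw_prob vs s * INR (Wplus K j s)) (draw_seqs K (ndraws p vs))).

Definition E_Wplus (pi : nat -> R) (p : R) (K j : nat) : R :=
  Eiid pi K (condE_Wplus p K j).

Definition Qlaw (pi : nat -> R) (p : R) (j : nat) : R :=
  series (fun n => pi n * ((p * INR n) ^ j / INR (fact j) * exp (- (p * INR n)))).

Definition E_rhs (pi : nat -> R) (p : R) (K : nat) : R :=
  Eiid pi K (fun vs => Rmin (p * INR (hd 0%nat vs)) 1 * (INR (hd 0%nat vs) / INR (sumV vs))).

(* Main.v *)
Require Import Defs.
From Stdlib Require Import Reals Lra Lia List Arith ZArith ClassicalEpsilon FunctionalExtensionality.
Open Scope R_scope.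

Lemma series_eq u l : infinite_sum u l -> series u = l.
Proof.
  intros H. unfold series.
  destruct (excluded_middle_informative _) as [H1|H1].
  - destruct (constructive_indefinite_description _ H1) as [l' Hl']. simpl.
    exact (UL_sequence _ _ _ Hl' H).
  - exfalso; apply H1; eauto.
Qed.

Lemma Un_cv_ext U V l : (forall n, U n = V n) -> Un_cv U l -> Un_cv V l.
Proof. intros H. replace V with U; auto. apply functional_extensionality; auto. Qed.

Lemma lim_le_ev U l c N : Un_cv U l -> (forall n, (N <= n)%nat -> U n <= c) -> l <= c.
Proof.
  intros H Hc. destruct (Rle_dec l c) as [|Hn]; auto. exfalso.
  destruct (H (l - c)) as [N' HN']. lra.
  specialize (HN' (max N N') (Nat.le_max_r _ _)).
  specialize (Hc (max N N') (Nat.le_max_l _ _)).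
  unfold Rdist in HN'. apply Rabs_def2 in HN'. lra.
Qed.

Lemma lim_ge_ev U l c N : Un_cv U l -> (forall n, (N <= n)%nat -> c <= U n) -> c <= l.
Proof.
  intros H Hc. destruct (Rle_dec c l) as [|Hn]; auto. exfalso.
  destruct (H (c - l)) as [N' HN']. lra.
  specialize (HN' (max N N') (Nat.le_max_r _ _)).
  specialize (Hc (max N N') (Nat.le_max_l _ _)).
  unfold Rdist in HN'. apply Rabs_def2 in HN'. lra.
Qed.

Lemma inf_sum_ext u w l : (forall n, u n = w n) -> infinite_sum u l -> infinite_sum w l.
Proof. intros H. replace w with u; auto. apply functional_extensionality; auto. Qed.

Lemma inf_sum_plus u w l1 l2 : infinite_sum u l1 -> infinite_sum w l2 ->
  infinite_sum (fun n => u n + w n) (l1 + l2).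
Proof.
  intros H1 H2. unfold infinite_sum.
  apply (Un_cv_ext (fun N => sum_f_R0 u N + sum_f_R0 w N)).
  - intros; rewrite plus_sum; auto.
  - apply CV_plus; auto.
Qed.

Lemma cv_const c : Un_cv (fun _ => c) c.
Proof. intros e He; exists 0%nat; intros; unfold Rdist; rewrite Rminus_diag, Rabs_R0; auto. Qed.

Lemma inf_sum_scal u l c : infinite_sum u l -> infinite_sum (fun n => c * u n) (c * l).
Proof.
  intros H. unfold infinite_sum.
  apply (Un_cv_ext (fun N => c * sum_f_R0 u N)).
  - intros; rewrite scal_sum. induction n; simpl; try ring. 
    rewrite <- IHn. ring.
  - apply CV_mult; auto. apply cv_const.
Qed.

Lemma inf_sum_le u w l1 l2 : (forall n, u n <= w n) -> infinite_sum u l1 -> infinite_sum w l2 -> l1 <= l2.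
Proof.
  intros H H1 H2. eapply Rle_cv_lim; [|exact H1|exact H2]. intros; apply sum_Rle; auto.
Qed.

Lemma inf_sum_zero : infinite_sum (fun _ => 0) 0.
Proof.
  unfold infinite_sum. apply (Un_cv_ext (fun _ => 0)).
  - intros n; induction n; simpl; lra.
  - apply cv_const.
Qed.

Lemma Rabs_le_inv a b : Rabs a <= b -> -b <= a <= b.
Proof. unfold Rabs; destruct (Rcase_abs a); lra. Qed.

Lemma cv_dom (w u : nat -> R) (lw c : R) : infinite_sum w lw -> (forall n, 0 <= w n) ->
  (forall n, Rabs (u n) <= c * w n) -> exists l, infinite_sum u l /\ Rabs l <= c * lw.
Proof.
  intros Hw Hw0 Hu.
  assert (Hcw : infinite_sum (fun n => c * w n) (c * lw)) by (apply inf_sum_scal; auto).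
  assert (Hp : {l | Un_cv (fun N => sum_f_R0 (fun n => Rmax (u n) 0) N) l}).
  { apply (Rseries_CV_comp _ (fun n => c * w n)).
    - intros n; split; [apply Rmax_r|]. specialize (Hu n). apply Rmax_lub.
      apply Rabs_le_inv in Hu; lra. apply Rle_trans with (Rabs (u n)); auto; apply Rabs_pos.
    - exists (c * lw); auto. }
  assert (Hm : {l | Un_cv (fun N => sum_f_R0 (fun n => Rmax (- u n) 0) N) l}).
  { apply (Rseries_CV_comp _ (fun n => c * w n)).
    - intros n; split; [apply Rmax_r|]. specialize (Hu n). apply Rmax_lub.
      apply Rabs_le_inv in Hu; lra. apply Rle_trans with (Rabs (u n)); auto; apply Rabs_pos.
    - exists (c * lw); auto. }
  destruct Hp as [lp Hlp]; destruct Hm as [lm Hlm].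
  assert (Hs : infinite_sum u (lp + (-1) * lm)).
  { apply (inf_sum_ext (fun n => Rmax (u n) 0 + (-1) * Rmax (- u n) 0)).
    - intros n. unfold Rmax. destruct (Rle_dec (u n) 0); destruct (Rle_dec (- u n) 0); lra.
    - apply inf_sum_plus; auto. apply inf_sum_scal; auto. }
  exists (lp + (-1) * lm); split; auto.
  apply Rabs_le; split.
  - assert (H1 := inf_sum_scal _ _ (-1) Hcw).
    assert (H2 : -1 * (c * lw) <= lp + -1 * lm).
    { apply (inf_sum_le _ _ _ _ (fun n => ltac:(simpl; pose proof (Rabs_le_inv _ _ (Hu n)); lra) : -1 * (c * w n) <= u n) H1 Hs). }
    lra.
  - apply (inf_sum_le _ _ _ _ (fun n => proj2 (Rabs_le_inv _ _ (Hu n))) Hs Hcw).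
Qed.
Lemma nonneg_bnd_cv u B : (forall n, 0 <= u n) -> (forall N, sum_f_R0 u N <= B) ->
  exists l, infinite_sum u l.
Proof.
  intros H0 HB.
  destruct (growing_cv (fun N => sum_f_R0 u N)) as [l Hl].
  - intros n; simpl; specialize (H0 (S n)); lra.
  - exists B; intros x [i ->]; auto.
  - exists l; exact Hl.
Qed.

Lemma term_le_sum u n : (forall k, 0 <= u k) -> u n <= sum_f_R0 u n.
Proof.
  intros H; destruct n; simpl; [lra|].
  assert (0 <= sum_f_R0 u n) by (apply cond_pos_sum; auto). lra.
Qed.

Lemma sum_swap (a : nat -> nat -> R) N M :
  sum_f_R0 (fun m => sum_f_R0 (fun n => a n m) N) M =
  sum_f_R0 (fun n => sum_f_R0 (fun m => a n m) M) N.
Proof.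
  induction M; simpl; auto.
  rewrite IHM. rewrite <- plus_sum. reflexivity.
Qed.

Lemma cv_fsum (U : nat -> nat -> R) (L : nat -> R) M :
  (forall m, Un_cv (fun N => U N m) (L m)) ->
  Un_cv (fun N => sum_f_R0 (fun m => U N m) M) (sum_f_R0 L M).
Proof.
  intros H; induction M; simpl; auto.
  apply CV_plus; auto.
Qed.

Lemma tonelli (a : nat -> nat -> R) (r : nat -> R) S :
  (forall n m, 0 <= a n m) -> (forall n, infinite_sum (a n) (r n)) -> infinite_sum r S ->
  exists c, (forall m, infinite_sum (fun n => a n m) (c m)) /\ infinite_sum c S.
Proof.
  intros Ha Hr HS.
  assert (Hr0 : forall n, 0 <= r n).
  { intros n. apply Rle_trans with (sum_f_R0 (a n) 0). simpl; auto.
    apply sum_incr; [apply Hr|auto]. }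
  assert (HrS : forall N, sum_f_R0 r N <= S) by (intros; apply sum_incr; auto).
  assert (Hcol : forall m, {l | Un_cv (fun N => sum_f_R0 (fun n => a n m) N) l}).
  { intros m. apply (Rseries_CV_comp _ r).
    - intros n; split; auto. apply Rle_trans with (sum_f_R0 (a n) m).
      apply term_le_sum; auto. apply sum_incr; [apply Hr|auto].
    - exists S; auto. }
  set (c := fun m => proj1_sig (Hcol m)).
  assert (Hc : forall m, infinite_sum (fun n => a n m) (c m)).
  { intros m; unfold c; destruct (Hcol m); auto. }
  assert (Hc0 : forall m, 0 <= c m).
  { intros m. apply Rle_trans with (sum_f_R0 (fun n => a n m) 0). simpl; auto.
    apply sum_incr; [apply Hc|auto]. }
  assert (HcS : forall M, sum_f_R0 c M <= S).
  { intros M. apply (lim_le_ev (fun N => sum_f_R0 (fun m => sum_f_R0 (fun n => a n m) N) M) _ _ 0%nat).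
    - apply cv_fsum; auto.
    - intros N _. rewrite sum_swap. apply Rle_trans with (sum_f_R0 r N); auto.
      apply sum_Rle; intros n _. apply sum_incr; [apply Hr|auto]. }
  destruct (nonneg_bnd_cv c S Hc0 HcS) as [S' HS'].
  assert (S' <= S) by (apply (lim_le_ev _ _ _ 0%nat HS'); auto).
  assert (S <= S').
  { apply (lim_le_ev _ _ _ 0%nat HS). intros N _.
    apply (lim_le_ev (fun M => sum_f_R0 (fun n => sum_f_R0 (fun m => a n m) M) N) _ _ 0%nat).
    - apply cv_fsum; intros n; apply Hr.
    - intros M _. rewrite <- sum_swap. apply Rle_trans with (sum_f_R0 c M).
      + apply sum_Rle; intros m _. apply sum_incr; [apply Hc|auto].
      + apply sum_incr; auto. }
  exists c; split; auto. replace S with S' by lra; auto.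
Qed.
Definition supp (pi : nat -> R) (vs : list nat) := Forall (fun x => 0 < pi x) vs.
Definition bnd (pi : nat -> R) K (f : list nat -> R) B :=
  forall vs, length vs = K -> supp pi vs -> Rabs (f vs) <= B.

Lemma bnd_cons pi k f B n : 0 < pi n -> bnd pi (S k) f B -> bnd pi k (fun l => f (n :: l)) B.
Proof. intros Hn H vs Hl Hs. apply H; simpl; auto. constructor; auto. Qed.

Lemma pi_cases (pi : nat -> R) (H0 : forall n, 0 <= pi n) n : pi n = 0 \/ 0 < pi n.
Proof. destruct (H0 n); auto. Qed.

Lemma Eiid_bnd pi (H0 : forall n, 0 <= pi n) (H1 : infinite_sum pi 1) K :
  forall f B, 0 <= B -> bnd pi K f B -> Rabs (Eiid pi K f) <= B.
Proof.
  induction K; intros f B HB Hf; simpl.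
  - apply Hf; simpl; auto. constructor.
  - destruct (cv_dom pi (fun n => pi n * Eiid pi K (fun l => f (n :: l))) 1 B H1 H0) as [l [Hl Hlb]].
    + intros n. destruct (pi_cases pi H0 n) as [Hz|Hp].
      * rewrite Hz, Rmult_0_l, Rabs_R0; lra.
      * rewrite Rabs_mult, Rabs_pos_eq by lra. rewrite Rmult_comm.
        apply Rmult_le_compat_r; [lra|]. apply IHK; auto. apply bnd_cons; auto.
    + rewrite (series_eq _ _ Hl). lra.
Qed.

Lemma Eiid_S_sum pi (H0 : forall n, 0 <= pi n) (H1 : infinite_sum pi 1) k f B :
  0 <= B -> bnd pi (S k) f B ->
  infinite_sum (fun n => pi n * Eiid pi k (fun l => f (n :: l))) (Eiid pi (S k) f).
Proof.
  intros HB Hf.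
  destruct (cv_dom pi (fun n => pi n * Eiid pi k (fun l => f (n :: l))) 1 B H1 H0) as [l [Hl Hlb]].
  + intros n. destruct (pi_cases pi H0 n) as [Hz|Hp].
    * rewrite Hz, Rmult_0_l, Rabs_R0; lra.
    * rewrite Rabs_mult, Rabs_pos_eq by lra. rewrite Rmult_comm.
      apply Rmult_le_compat_r; [lra|]. apply Eiid_bnd; auto. apply bnd_cons; auto.
  + simpl. rewrite (series_eq _ _ Hl). auto.
Qed.

Lemma Eiid_ext pi (H0 : forall n, 0 <= pi n) K : forall f g,
  (forall vs, length vs = K -> supp pi vs -> f vs = g vs) -> Eiid pi K f = Eiid pi K g.
Proof.
  induction K; intros f g H; simpl.
  - apply H; simpl; auto. constructor.
  - f_equal. apply functional_extensionality; intros n.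
    destruct (pi_cases pi H0 n) as [Hz|Hp].
    + rewrite Hz; ring.
    + f_equal. apply IHK. intros vs Hl Hs. apply H; simpl; auto. constructor; auto.
Qed.

Lemma Eiid_le pi (H0 : forall n, 0 <= pi n) (H1 : infinite_sum pi 1) K : forall f g Bf Bg,
  0 <= Bf -> 0 <= Bg -> bnd pi K f Bf -> bnd pi K g Bg ->
  (forall vs, length vs = K -> supp pi vs -> f vs <= g vs) -> Eiid pi K f <= Eiid pi K g.
Proof.
  induction K; intros f g Bf Bg HBf HBg Hf Hg H.
  - simpl; apply H; simpl; auto. constructor.
  - eapply inf_sum_le; [| apply (Eiid_S_sum pi H0 H1 K f Bf); auto | apply (Eiid_S_sum pi H0 H1 K g Bg); auto].
    intros n. destruct (pi_cases pi H0 n) as [Hz|Hp].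
    + rewrite Hz; lra.
    + apply Rmult_le_compat_l; [lra|]. apply (IHK _ _ Bf Bg); auto; try (apply bnd_cons; auto).
      intros vs Hl Hs. apply H; simpl; auto. constructor; auto.
Qed.

Lemma Eiid_const pi (H0 : forall n, 0 <= pi n) (H1 : infinite_sum pi 1) K c :
  Eiid pi K (fun _ => c) = c.
Proof.
  induction K; simpl; auto.
  apply series_eq. apply (inf_sum_ext (fun n => c * pi n)).
  - intros n; rewrite IHK; ring.
  - assert (E := inf_sum_scal _ _ c H1). rewrite Rmult_1_r in E. exact E.
Qed.

Lemma Eiid_plus pi (H0 : forall n, 0 <= pi n) (H1 : infinite_sum pi 1) K : forall f g Bf Bg,
  0 <= Bf -> 0 <= Bg -> bnd pi K f Bf -> bnd pi K g Bg ->
  Eiid pi K (fun vs => f vs + g vs) = Eiid pi K f + Eiid pi K g.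
Proof.
  induction K; intros f g Bf Bg HBf HBg Hf Hg.
  - simpl; auto.
  - assert (Hfg : bnd pi (S K) (fun vs => f vs + g vs) (Bf + Bg)).
    { intros vs Hl Hs. eapply Rle_trans; [apply Rabs_triang|]. apply Rplus_le_compat; auto. }
    pose proof (Eiid_S_sum pi H0 H1 K _ _ (Rplus_le_le_0_compat _ _ HBf HBg) Hfg) as E.
    apply series_eq in E. rewrite <- E. apply series_eq.
    apply (inf_sum_ext (fun n => pi n * Eiid pi K (fun l => f (n :: l)) + pi n * Eiid pi K (fun l => g (n :: l)))).
    + intros n. destruct (pi_cases pi H0 n) as [Hz|Hp].
      * rewrite Hz; ring.
      * rewrite (IHK _ _ Bf Bg); auto; try (apply bnd_cons; auto). ring.
    + apply inf_sum_plus; [apply (Eiid_S_sum pi H0 H1 K f Bf)|apply (Eiid_S_sum pi H0 H1 K g Bg)]; auto.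
Qed.

Lemma Eiid_scal pi (H0 : forall n, 0 <= pi n) (H1 : infinite_sum pi 1) K : forall f Bf c,
  0 <= Bf -> bnd pi K f Bf -> Eiid pi K (fun vs => c * f vs) = c * Eiid pi K f.
Proof.
  induction K; intros f Bf c HBf Hf.
  - simpl; auto.
  - simpl. apply series_eq.
    apply (inf_sum_ext (fun n => c * (pi n * Eiid pi K (fun l => f (n :: l))))).
    + intros n. destruct (pi_cases pi H0 n) as [Hz|Hp].
      * rewrite Hz; ring.
      * rewrite (IHK _ Bf c); auto; try (apply bnd_cons; auto). ring.
    + apply inf_sum_scal. apply (Eiid_S_sum pi H0 H1 K f Bf); auto.
Qed.

Fixpoint fsum (M : nat) (F : nat -> R) : R :=
  match M with O => 0 | S m => fsum m F + F m end.

Lemma fsum_ext M F G : (forall i, (i < M)%nat -> F i = G i) -> fsum M F = fsum M G.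
Proof. induction M; intros H; simpl; auto. rewrite IHM, H; auto. Qed.

Lemma Eiid_fsum pi (H0 : forall n, 0 <= pi n) (H1 : infinite_sum pi 1) K M (F : nat -> list nat -> R) B :
  0 <= B -> (forall i, bnd pi K (F i) B) ->
  Eiid pi K (fun vs => fsum M (fun i => F i vs)) = fsum M (fun i => Eiid pi K (F i)).
Proof.
  intros HB HF. induction M; simpl.
  - apply Eiid_const; auto.
  - rewrite (Eiid_plus pi H0 H1 K _ _ (INR M * B) B); auto.
    + rewrite IHM; auto.
    + apply Rmult_le_pos; auto. apply pos_INR.
    + clear IHM. induction M; intros vs Hl Hs; cbn [fsum].
      * rewrite Rabs_R0; simpl; lra.
      * eapply Rle_trans; [apply Rabs_triang|]. rewrite S_INR.
        specialize (IHM vs Hl Hs). specialize (HF M vs Hl Hs). lra.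
Qed.

Lemma Eiid_marg pi (H0 : forall n, 0 <= pi n) (H1 : infinite_sum pi 1) K : forall i (phi : nat -> R) B,
  (i < K)%nat -> 0 <= B -> (forall n, 0 < pi n -> Rabs (phi n) <= B) ->
  Eiid pi K (fun vs => phi (nth i vs 0%nat)) = series (fun n => pi n * phi n).
Proof.
  induction K; intros i phi B Hi HB Hphi; [lia|].
  destruct i as [|i].
  - simpl. f_equal. apply functional_extensionality; intros n.
    rewrite Eiid_const; auto.
  - simpl. set (X := series (fun n => pi n * phi n)).
    transitivity (series (fun n => pi n * X)).
    + f_equal. apply functional_extensionality; intros n. f_equal.
      apply (IHK i phi B); auto. lia.
    + apply series_eq. apply (inf_sum_ext (fun n => X * pi n)); [intros; ring|].
      assert (E := inf_sum_scal _ _ X H1). rewrite Rmult_1_r in E. exact E.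
Qed.
Lemma Eiid_nonneg pi (H0 : forall n, 0 <= pi n) (H1 : infinite_sum pi 1) K f B :
  0 <= B -> bnd pi K f B -> (forall vs, length vs = K -> supp pi vs -> 0 <= f vs) -> 0 <= Eiid pi K f.
Proof.
  intros HB Hf Hpos. rewrite <- (Eiid_const pi H0 H1 K 0).
  apply (Eiid_le pi H0 H1 K _ _ 0 B); auto; try lra.
  intros vs _ _; rewrite Rabs_R0; lra.
Qed.

Fixpoint swap_at (d : nat) (l : list nat) : list nat :=
  match d with
  | O => match l with a :: b :: t => b :: a :: t | _ => l end
  | S d' => match l with a :: t => a :: swap_at d' t | nil => nil end
  end.

Lemma swap_length d : forall l, length (swap_at d l) = length l.
Proof.
  induction d; intros l.
  - destruct l as [|a [|b t]]; reflexivity.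
  - destruct l; simpl; auto.
Qed.

Lemma swap_supp pi d : forall l, supp pi l -> supp pi (swap_at d l).
Proof.
  unfold supp; induction d; intros l H.
  - destruct l as [|a [|b t]]; auto. inversion H; subst. inversion H3; subst.
    simpl. repeat constructor; auto.
  - destruct l; simpl; auto. inversion H; subst. constructor; auto.
Qed.

Lemma swap_sumV d : forall l, sumV (swap_at d l) = sumV l.
Proof.
  unfold sumV; induction d; intros l.
  - destruct l as [|a [|b t]]; simpl; lia.
  - destruct l; simpl; auto.
Qed.

Lemma swap_nth d : forall l, (S d < length l)%nat -> nth (S d) (swap_at d l) 0%nat = nth d l 0%nat.
Proof.
  induction d; intros l H.
  - destruct l as [|a [|b t]]; simpl in *; try lia; reflexivity.
  - destruct l as [|a t]; simpl in *; try lia. apply IHd. lia.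
Qed.

Lemma Eiid_swap pi (H0 : forall n, 0 <= pi n) (H1 : infinite_sum pi 1) d : forall K f B,
  (d + 2 <= K)%nat -> 0 <= B -> bnd pi K f B ->
  (forall vs, length vs = K -> supp pi vs -> 0 <= f vs) ->
  Eiid pi K f = Eiid pi K (fun l => f (swap_at d l)).
Proof.
  induction d; intros K f B HK HB Hf Hpos.
  - destruct K as [|[|k]]; try lia.
    set (E := fun n m => Eiid pi k (fun l => f (n :: m :: l))).
    set (a := fun n m => pi n * (pi m * E n m)).
    set (r := fun n => pi n * Eiid pi (S k) (fun l => f (n :: l))).
    assert (Ha : forall n m, 0 <= a n m).
    { intros n m; unfold a.
      destruct (pi_cases pi H0 n) as [Hn|Hn]; [rewrite Hn; lra|].
      destruct (pi_cases pi H0 m) as [Hm|Hm]; [rewrite Hm; lra|].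
      apply Rmult_le_pos; [lra|]. apply Rmult_le_pos; [lra|].
      apply (Eiid_nonneg pi H0 H1 k _ B HB).
      - apply (bnd_cons pi k (fun l => f (n :: l)) B m); auto. apply bnd_cons; auto.
      - intros vs Hl Hs. apply Hpos; simpl; auto. repeat constructor; auto. }
    assert (Hr : forall n, infinite_sum (a n) (r n)).
    { intros n; unfold a, r. destruct (pi_cases pi H0 n) as [Hn|Hn].
      - rewrite Hn. apply (inf_sum_ext (fun _ => 0)); [intros; ring|].
        rewrite Rmult_0_l. apply inf_sum_zero.
      - apply inf_sum_scal. apply (Eiid_S_sum pi H0 H1 k (fun l => f (n :: l)) B HB). apply bnd_cons; auto. }
    assert (HS : infinite_sum r (Eiid pi (S (S k)) f)).
    { apply (Eiid_S_sum pi H0 H1 (S k) _ B HB Hf). }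
    destruct (tonelli a r _ Ha Hr HS) as [c [Hc HcS]].
    rewrite <- (series_eq _ _ HcS). cbn [Eiid]. f_equal.
    apply functional_extensionality; intros x.
    destruct (pi_cases pi H0 x) as [Hx|Hx].
    + rewrite Hx, Rmult_0_l. apply (UL_sequence (fun N => sum_f_R0 (fun n => a n x) N)); [apply Hc|].
      apply (Un_cv_ext (fun N => sum_f_R0 (fun _ => 0) N)).
      * intros N; apply sum_eq; intros; unfold a; rewrite Hx; ring.
      * apply inf_sum_zero.
    + assert (Hcx : infinite_sum (fun n => pi n * E n x) (/ pi x * c x)).
      { apply (inf_sum_ext (fun n => / pi x * a n x)).
        - intros n; unfold a. field. lra.
        - apply inf_sum_scal; auto. }
      cbn [swap_at]. unfold E in Hcx. rewrite (series_eq _ _ Hcx). field. lra.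
  - destruct K as [|K]; try lia. cbn [Eiid]. f_equal.
    apply functional_extensionality; intros n.
    destruct (pi_cases pi H0 n) as [Hn|Hn]; [rewrite Hn; ring|].
    f_equal. cbn [swap_at]. apply (IHd K (fun l => f (n :: l)) B); auto; try lia.
    + apply bnd_cons; auto.
    + intros vs Hl Hs. apply Hpos; simpl; auto. constructor; auto.
Qed.

Lemma Eiid_exch pi (H0 : forall n, 0 <= pi n) (H1 : infinite_sum pi 1) K (G : nat -> nat -> R) :
  (forall vs i, 0 <= G (nth i vs 0%nat) (sumV vs) <= 1) ->
  forall i, (i < K)%nat ->
  Eiid pi K (fun vs => G (nth i vs 0%nat) (sumV vs)) = Eiid pi K (fun vs => G (nth 0 vs 0%nat) (sumV vs)).
Proof.
  intros HG i. induction i; intros Hi; auto.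
  rewrite (Eiid_swap pi H0 H1 i K _ 1).
  - rewrite <- IHi by lia. apply Eiid_ext; auto. intros vs Hl Hs.
    rewrite swap_sumV, swap_nth; auto. lia.
  - lia.
  - lra.
  - intros vs _ _. rewrite Rabs_pos_eq; apply HG.
  - intros vs _ _; apply HG.
Qed.
Definition poi (lam : R) (l : nat) : R := lam ^ l / INR (fact l) * exp (- lam).

Lemma poi_pos lam l : 0 < lam -> 0 < poi lam l.
Proof.
  intros H; unfold poi. apply Rmult_lt_0_compat; [|apply exp_pos].
  apply Rdiv_lt_0_compat; [apply pow_lt; auto|]. apply lt_0_INR, lt_O_fact.
Qed.

Lemma poi_nonneg lam l : 0 <= lam -> 0 <= poi lam l.
Proof.
  intros H; unfold poi. apply Rmult_le_pos; [|left; apply exp_pos].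
  unfold Rdiv; apply Rmult_le_pos; [apply pow_le; auto|]. left; apply Rinv_0_lt_compat, lt_0_INR, lt_O_fact.
Qed.

Lemma poi_S lam l : INR (S l) * poi lam (S l) = lam * poi lam l.
Proof.
  unfold poi. rewrite fact_simpl, mult_INR. simpl pow.
  assert (0 < INR (fact l)) by apply lt_0_INR, lt_O_fact.
  assert (0 < INR (S l)) by (apply lt_0_INR; lia).
  field; lra.
Qed.

Lemma poi_sum lam : infinite_sum (poi lam) 1.
Proof.
  assert (He : exp_in lam (exp lam)) by (unfold exp; destruct (exist_exp lam); simpl; auto).
  unfold exp_in in He.
  apply (inf_sum_scal _ _ (exp (- lam))) in He.
  replace (exp (-lam) * exp lam) with 1 in He.
  - eapply inf_sum_ext; [|exact He]. intros n; unfold poi, Rdiv; ring.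
  - rewrite <- exp_plus. replace (- lam + lam) with 0 by ring. now rewrite exp_0.
Qed.

Lemma sum_fsum (u : nat -> R) k : sum_f_R0 u k = fsum (S k) u.
Proof. induction k; cbn [sum_f_R0 fsum]; [ring|]. rewrite IHk; cbn [fsum]; ring. Qed.

Definition Fc lam k := fsum (S k) (poi lam).

Lemma fsum_nonneg M F : (forall i, 0 <= F i) -> 0 <= fsum M F.
Proof. intros H; induction M; simpl; [lra|]. specialize (H M); lra. Qed.

Lemma fsum_mono F a b : (forall i, 0 <= F i) -> (a <= b)%nat -> fsum a F <= fsum b F.
Proof.
  intros H Hab. induction Hab; [lra|]. simpl. specialize (H m); lra.
Qed.

Lemma Fc_le1 lam k : 0 <= lam -> Fc lam k <= 1.
Proof.
  intros H. unfold Fc. rewrite <- sum_fsum. apply sum_incr; [apply poi_sum|].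
  intros; apply poi_nonneg; auto.
Qed.

Lemma fsum_le1 lam j : 0 <= lam -> fsum j (poi lam) <= 1.
Proof.
  intros H. destruct j; simpl. lra. apply (Fc_le1 lam j H).
Qed.

Lemma geomA lam k : 0 <= lam -> lam * Fc lam k <= INR (S k) * (Fc lam (S k) - poi lam 0).
Proof.
  intros Hl. unfold Fc. induction k.
  - cbn [fsum]. pose proof (poi_S lam 0). replace (INR 1) with 1 in * by reflexivity. lra.
  - change (fsum (S (S k)) (poi lam)) with (fsum (S k) (poi lam) + poi lam (S k)) in *.
    change (fsum (S (S (S k))) (poi lam)) with (fsum (S k) (poi lam) + poi lam (S k) + poi lam (S (S k))).
    pose proof (poi_S lam (S k)).
    assert (0 <= fsum (S k) (poi lam) + poi lam (S k) - poi lam 0).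
    { change (fsum (S k) (poi lam) + poi lam (S k)) with (fsum (S (S k)) (poi lam)).
      assert (fsum 1 (poi lam) <= fsum (S (S k)) (poi lam)) by (apply fsum_mono; [intros; apply poi_nonneg; auto|lia]).
      change (fsum 1 (poi lam)) with (0 + poi lam 0) in H0. lra. }
    rewrite (S_INR (S k)) in *. lra.
Qed.

Lemma geomB lam k : 0 <= lam -> (lam - INR (S k)) * Fc lam k <= lam * poi lam k.
Proof.
  intros Hl. pose proof (geomA lam k Hl). pose proof (poi_S lam k).
  unfold Fc in *. change (fsum (S (S k)) (poi lam)) with (fsum (S k) (poi lam) + poi lam (S k)) in H.
  pose proof (poi_nonneg lam 0 Hl).
  assert (0 <= INR (S k)) by apply pos_INR. nra.
Qed.

Lemma tail_fin lam m t : 0 <= lam ->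
  (INR m + 1 - lam) * (Fc lam (m + t) - Fc lam m) + INR (m + t + 1) * poi lam (m + t + 1) <= lam * poi lam m.
Proof.
  intros Hl. induction t.
  - rewrite Nat.add_0_r. replace (m + 1)%nat with (S m) by lia. rewrite poi_S. lra.
  - replace (m + S t)%nat with (S (m + t)) by lia.
    replace (S (m + t) + 1)%nat with (S (S (m + t))) by lia.
    replace (m + t + 1)%nat with (S (m + t)) in IHt by lia.
    assert (HF : Fc lam (S (m + t)) = Fc lam (m + t) + poi lam (S (m + t))) by reflexivity.
    rewrite HF, poi_S.
    assert (HI : INR (S (m + t)) = INR m + INR t + 1) by (rewrite S_INR, plus_INR; ring).
    rewrite HI in IHt.
    pose proof (poi_nonneg lam (S (m + t)) Hl). assert (0 <= INR t) by apply pos_INR. nra.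
Qed.

Lemma tail_bound lam m : 0 <= lam -> (1 - Fc lam m) * (INR m + 1 - lam) <= lam * poi lam m.
Proof.
  intros Hl.
  assert (Hcv : Un_cv (fun N => (INR m + 1 - lam) * (sum_f_R0 (poi lam) N - Fc lam m)) ((INR m + 1 - lam) * (1 - Fc lam m))).
  { apply CV_mult; [apply cv_const|]. apply CV_minus; [apply poi_sum|apply cv_const]. }
  rewrite Rmult_comm. apply (lim_le_ev _ _ _ m Hcv). intros N HN.
  replace N with (m + (N - m))%nat by lia. rewrite sum_fsum.
  pose proof (tail_fin lam m (N - m) Hl). unfold Fc in *.
  assert (0 <= INR (m + (N - m) + 1) * poi lam (m + (N - m) + 1)).
  { apply Rmult_le_pos; [apply pos_INR|apply poi_nonneg; auto]. }
  lra.
Qed.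
Definition Pt lam j := 1 - fsum j (poi lam).
Definition hS lam j k := (if Nat.leb j k then 1 else 0) - Pt lam j.
Definition ShS lam j k := fsum (S k) (fun m => poi lam m * hS lam j m).
Definition gS lam j k := match k with O => 0 | S k' => ShS lam j k' / (lam * poi lam k') end.

Lemma Sh_low lam j k : (k < j)%nat -> ShS lam j k = - Pt lam j * Fc lam k.
Proof.
  induction k; intros H.
  - unfold ShS, hS, Fc. cbn [fsum]. rewrite (proj2 (Nat.leb_gt j 0) H). ring.
  - unfold ShS in *. cbn [fsum] in *. rewrite IHk by lia. unfold hS.
    rewrite (proj2 (Nat.leb_gt j (S k)) H). unfold Fc. cbn [fsum]. ring.
Qed.

Lemma Sh_high lam j k : (j <= S k)%nat -> ShS lam j k = - fsum j (poi lam) * (1 - Fc lam k).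
Proof.
  induction k; intros H.
  - destruct j as [|[|j]]; try lia; unfold ShS, hS, Pt, Fc; cbn; ring.
  - destruct (Nat.eq_dec j (S (S k))) as [E|E].
    + rewrite Sh_low by lia. unfold Pt, Fc. rewrite E. ring.
    + unfold ShS in *. cbn [fsum] in *. rewrite IHk by lia. unfold hS.
      rewrite (proj2 (Nat.leb_le j (S k))) by lia. unfold Pt, Fc. cbn [fsum]. ring.
Qed.

Lemma stein_id lam j k : 0 < lam -> lam * gS lam j (S k) - INR k * gS lam j k = hS lam j k.
Proof.
  intros Hl. destruct k as [|k].
  - unfold gS, ShS. cbn [fsum]. pose proof (poi_pos lam 0 Hl). simpl INR. field. lra.
  - unfold gS. change (ShS lam j (S k)) with (ShS lam j k + poi lam (S k) * hS lam j (S k)).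
    pose proof (poi_S lam k) as HS. pose proof (poi_pos lam k Hl). pose proof (poi_pos lam (S k) Hl).
    assert (0 < INR (S k)) by (apply lt_0_INR; lia).
    rewrite <- HS. field. lra.
Qed.

Lemma div_le X D C : 0 < D -> X <= C * D -> X / D <= C.
Proof. intros HD H. unfold Rdiv. apply (Rmult_le_reg_r D); auto. rewrite Rmult_assoc, Rinv_l; lra. Qed.

Lemma dg_bound lam j k : 0 < lam ->
  Rabs (gS lam j (S (S k)) - gS lam j (S k)) <= (1 - poi lam 0) / lam.
Proof.
  intros Hl. unfold gS.
  pose proof (poi_S lam k) as HS. pose proof (poi_pos lam k Hl) as Ha. pose proof (poi_pos lam (S k) Hl) as Hb.
  assert (Hm : 1 <= INR (S k)) by (apply (le_INR 1); lia).
  assert (HFk : 0 <= Fc lam k) by (apply fsum_nonneg; intros; apply poi_nonneg; lra).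
  assert (HFm : Fc lam (S k) = Fc lam k + poi lam (S k)) by reflexivity.
  assert (HTm : 0 <= 1 - Fc lam (S k)) by (pose proof (Fc_le1 lam (S k)); lra).
  pose proof (geomB lam k ltac:(lra)) as G1.
  pose proof (tail_bound lam (S k) ltac:(lra)) as G2.
  pose proof (geomA lam k ltac:(lra)) as G3.
  pose proof (poi_nonneg lam 0 ltac:(lra)) as Hp0.
  set (a := poi lam k) in *. set (b := poi lam (S k)) in *. set (m := INR (S k)) in *.
  set (Fk := Fc lam k) in *. set (Fm := Fc lam (S k)) in *. set (p0 := poi lam 0) in *.
  assert (G2' : (1 - Fm) * (m - lam) <= lam * b) by nra.
  destruct (Nat.lt_ge_cases (S k) j) as [Hj|Hj].
  - rewrite (Sh_low lam j (S k)) by lia. rewrite (Sh_low lam j k) by lia. fold Fk Fm.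
    set (P := Pt lam j).
    assert (HP0 : 0 <= P) by (unfold P, Pt; pose proof (fsum_le1 lam j ltac:(lra)); lra).
    assert (HPT : P <= 1 - Fm).
    { unfold P, Pt, Fm, Fc. assert (fsum (S (S k)) (poi lam) <= fsum j (poi lam)).
      apply fsum_mono; [intros; apply poi_nonneg; lra| lia]. lra. }
    set (N := m * Fm - lam * Fk).
    assert (HN : 0 <= N) by (unfold N; rewrite HFm; nra).
    assert (E : - P * Fm / (lam * b) - - P * Fk / (lam * a) = - (P * N / (lam * m * b))).
    { unfold N. rewrite <- HS. field. repeat split; lra. }
    rewrite E, Rabs_Ropp, Rabs_pos_eq.
    + apply div_le. apply Rmult_lt_0_compat; [|lra]. apply Rmult_lt_0_compat; lra.
      replace ((1 - p0) / lam * (lam * m * b)) with ((1 - p0) * m * b) by (field; lra).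
      apply Rle_trans with ((1 - Fm) * N). apply Rmult_le_compat_r; auto.
      unfold N. rewrite HFm in *.
      assert ((1 - (Fk + b)) * (m - lam) * Fk <= lam * b * Fk) by (apply Rmult_le_compat_r; auto).
      assert (b * (lam * Fk) <= b * (m * (Fk + b - p0))) by (apply Rmult_le_compat_l; lra).
      nra.
    + apply Rmult_le_pos; [apply Rmult_le_pos; auto|]. left; apply Rinv_0_lt_compat.
      apply Rmult_lt_0_compat; [|lra]. apply Rmult_lt_0_compat; lra.
  - rewrite (Sh_high lam j (S k)) by lia. rewrite (Sh_high lam j k) by lia. fold Fk Fm.
    set (P := fsum j (poi lam)).
    assert (HP0 : 0 <= P) by (apply fsum_nonneg; intros; apply poi_nonneg; lra).
    assert (HPF : P <= Fk) by (unfold P, Fk, Fc; apply fsum_mono; [intros; apply poi_nonneg; lra| lia]).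
    set (N := (lam - m) * (1 - Fm) + lam * b).
    assert (HN : 0 <= N) by (unfold N; nra).
    assert (E : - P * (1 - Fm) / (lam * b) - - P * (1 - Fk) / (lam * a) = P * N / (lam * m * b)).
    { unfold N. rewrite <- HS. rewrite HFm. field. repeat split; lra. }
    rewrite E, Rabs_pos_eq.
    + apply div_le. apply Rmult_lt_0_compat; [|lra]. apply Rmult_lt_0_compat; lra.
      replace ((1 - p0) / lam * (lam * m * b)) with ((1 - p0) * m * b) by (field; lra).
      apply Rle_trans with (Fk * N). apply Rmult_le_compat_r; auto.
      unfold N. rewrite HFm in *.
      assert ((lam - m) * Fk * (1 - (Fk + b)) <= lam * a * (1 - (Fk + b))) by (apply Rmult_le_compat_r; lra).
      assert (b * (lam * Fk) <= b * (m * (Fk + b - p0))) by (apply Rmult_le_compat_l; lra).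
      nra.
    + apply Rmult_le_pos; [apply Rmult_le_pos; auto|]. left; apply Rinv_0_lt_compat.
      apply Rmult_lt_0_compat; [|lra]. apply Rmult_lt_0_compat; lra.
Qed.
Fixpoint Lq (q : R) (n : nat) (phi : nat -> R) : R :=
  match n with
  | O => phi 0%nat
  | S n' => q * Lq q n' (fun k => phi (S k)) + (1 - q) * Lq q n' phi
  end.

Lemma Lq_ext q n phi psi : (forall k, phi k = psi k) -> Lq q n phi = Lq q n psi.
Proof. intros H. replace psi with phi; auto. apply functional_extensionality; auto. Qed.

Lemma Lq_plus q n : forall phi psi, Lq q n (fun k => phi k + psi k) = Lq q n phi + Lq q n psi.
Proof. induction n; intros; simpl; auto. rewrite !IHn. ring. Qed.

Lemma Lq_scal q n : forall phi c, Lq q n (fun k => c * phi k) = c * Lq q n phi.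
Proof. induction n; intros; simpl; auto. rewrite !IHn. ring. Qed.

Lemma Lq_const q n c : Lq q n (fun _ => c) = c.
Proof. induction n; simpl; auto. rewrite IHn. ring. Qed.

Lemma Lq_bound q n : 0 <= q <= 1 -> forall phi M, (forall k, Rabs (phi k) <= M) -> Rabs (Lq q n phi) <= M.
Proof.
  intros Hq; induction n; intros phi M H; simpl; auto.
  eapply Rle_trans; [apply Rabs_triang|]. rewrite !Rabs_mult, (Rabs_pos_eq q), (Rabs_pos_eq (1 - q)) by lra.
  pose proof (IHn (fun k => phi (S k)) M (fun k => H (S k))). pose proof (IHn phi M H). nra.
Qed.

Lemma Lq_sb q n : forall g, Lq q (S n) (fun k => INR k * g k) = INR (S n) * q * Lq q n (fun k => g (S k)).
Proof.
  induction n; intros g.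
  - simpl. ring.
  - change (Lq q (S (S n)) (fun k => INR k * g k)) with
      (q * Lq q (S n) (fun k => INR (S k) * g (S k)) + (1 - q) * Lq q (S n) (fun k => INR k * g k)).
    rewrite (Lq_ext q (S n) (fun k => INR (S k) * g (S k)) (fun k => INR k * g (S k) + g (S k)))
      by (intros; rewrite S_INR; ring).
    rewrite Lq_plus, (IHn (fun k => g (S k))), IHn.
    change (Lq q (S n) (fun k => g (S k))) with
      (q * Lq q n (fun k => g (S (S k))) + (1 - q) * Lq q n (fun k => g (S k))).
    rewrite !S_INR. ring.
Qed.

Lemma stein_main q N lam j : 0 < q <= 1 -> (1 <= N)%nat -> lam = INR N * q ->
  Rabs (Lq q N (fun k => if Nat.leb j k then 1 else 0) - Pt lam j) <= q * (1 - poi lam 0).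
Proof.
  intros Hq HN Hlam. destruct N as [|n]; [lia|].
  assert (Hl : 0 < lam) by (rewrite Hlam; apply Rmult_lt_0_compat; [apply lt_0_INR; lia|lra]).
  set (g := gS lam j).
  assert (E1 : Lq q (S n) (fun k => if Nat.leb j k then 1 else 0) - Pt lam j
               = Lq q (S n) (fun k => lam * g (S k) + (-1) * (INR k * g k))).
  { rewrite (Lq_ext q (S n) (fun k => lam * g (S k) + (-1) * (INR k * g k))
               (fun k => (if Nat.leb j k then 1 else 0) + (- Pt lam j))).
    - rewrite Lq_plus, Lq_const. ring.
    - intros k. pose proof (stein_id lam j k Hl). unfold hS in H. unfold g. lra. }
  rewrite E1, Lq_plus, Lq_scal, Lq_scal, Lq_sb.
  change (Lq q (S n) (fun k => g (S k))) with
      (q * Lq q n (fun k => g (S (S k))) + (1 - q) * Lq q n (fun k => g (S k))).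
  replace (lam * (q * Lq q n (fun k => g (S (S k))) + (1 - q) * Lq q n (fun k => g (S k))) +
     -1 * (INR (S n) * q * Lq q n (fun k => g (S k))))
    with (lam * q * (Lq q n (fun k => g (S (S k))) + (-1) * Lq q n (fun k => g (S k))))
    by (rewrite Hlam; ring).
  rewrite <- Lq_scal, <- Lq_plus.
  rewrite Rabs_mult, Rabs_pos_eq by (apply Rmult_le_pos; lra).
  replace (q * (1 - poi lam 0)) with (lam * q * ((1 - poi lam 0) / lam)) by (field; lra).
  apply Rmult_le_compat_l; [apply Rmult_le_pos; lra|].
  apply Lq_bound; [lra|]. intros k.
  replace (g (S (S k)) + -1 * g (S k)) with (g (S (S k)) - g (S k)) by ring.
  apply dg_bound; auto.
Qed.
Definition Sl (vs : list nat) (l : list (list nat)) (psi : list nat -> R) : R :=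
  fold_right Rplus 0 (map (fun s => draw_prob vs s * psi s) l).

Lemma fr_app (l1 l2 : list R) : fold_right Rplus 0 (l1 ++ l2) = fold_right Rplus 0 l1 + fold_right Rplus 0 l2.
Proof. induction l1; simpl; [ring|]. rewrite IHl1; ring. Qed.

Lemma fr_seq (F : nat -> R) K : fold_right Rplus 0 (map F (seq 0 K)) = fsum K F.
Proof.
  induction K; [reflexivity|]. rewrite seq_S, map_app, fr_app, IHK. simpl. ring.
Qed.

Lemma Sl_plus vs l psi phi : Sl vs l (fun s => psi s + phi s) = Sl vs l psi + Sl vs l phi.
Proof. unfold Sl; induction l; simpl; [ring|]. rewrite IHl; ring. Qed.

Lemma Sl_scal vs l psi c : Sl vs l (fun s => c * psi s) = c * Sl vs l psi.
Proof. unfold Sl; induction l; simpl; [ring|]. rewrite IHl; ring. Qed.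

Lemma Sl_zero vs l : Sl vs l (fun _ => 0) = 0.
Proof. unfold Sl; induction l; simpl; [ring|]. rewrite IHl; ring. Qed.

Lemma Sl_ext vs l psi phi : (forall s, psi s = phi s) -> Sl vs l psi = Sl vs l phi.
Proof. intros H. replace phi with psi; auto. apply functional_extensionality; auto. Qed.

Lemma Sl_fsum vs l M (F : nat -> list nat -> R) :
  Sl vs l (fun s => fsum M (fun i => F i s)) = fsum M (fun i => Sl vs l (F i)).
Proof.
  induction M; simpl. apply Sl_zero. rewrite Sl_plus, IHM. reflexivity.
Qed.

Definition qc (vs : list nat) (c : nat) : R := INR (nth c vs 0%nat) / INR (sumV vs).

Lemma Sl_flat vs D (psi : list nat -> R) cs :
  Sl vs (flat_map (fun c => map (cons c) D) cs) psi =
  fold_right Rplus 0 (map (fun c => qc vs c * Sl vs D (fun s => psi (c :: s))) cs).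
Proof.
  induction cs; simpl; auto.
  unfold Sl in *. rewrite map_app, fr_app, IHcs. f_equal.
  rewrite map_map. simpl.
  clear IHcs. induction D as [|d D IHD]; simpl; [ring|]. rewrite IHD. unfold qc. ring.
Qed.

Lemma Sd_S vs K n psi :
  Sl vs (draw_seqs K (S n)) psi = fsum K (fun c => qc vs c * Sl vs (draw_seqs K n) (fun s => psi (c :: s))).
Proof. simpl. rewrite Sl_flat, fr_seq. reflexivity. Qed.

Lemma fsum_shift n F : fsum (S n) F = F 0%nat + fsum n (fun c => F (S c)).
Proof. induction n; simpl in *; [ring|]. rewrite IHn. ring. Qed.

Lemma fsum_nth vs : fsum (length vs) (fun c => INR (nth c vs 0%nat)) = INR (sumV vs).
Proof.
  induction vs; simpl length; [reflexivity|].
  rewrite fsum_shift. simpl nth. rewrite IHvs. unfold sumV; simpl fold_right. rewrite plus_INR. ring.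
Qed.

Lemma fsum_scalr M F d : fsum M (fun c => F c * d) = fsum M F * d.
Proof. induction M; simpl; [ring|]. rewrite IHM; ring. Qed.

Lemma fsum_qc vs : (0 < sumV vs)%nat -> fsum (length vs) (qc vs) = 1.
Proof.
  intros H. unfold qc, Rdiv. rewrite fsum_scalr, fsum_nth. apply Rinv_r.
  apply not_0_INR; lia.
Qed.

Lemma fsum_sel K (q : nat -> R) i X Y :
  fsum K (fun c => q c * (if Nat.eq_dec c i then X else Y)) =
  fsum K q * Y + (if Nat.ltb i K then q i * (X - Y) else 0).
Proof.
  induction K; simpl; [ring|]. rewrite IHK.
  destruct (Nat.eq_dec K i) as [E|E].
  - subst. rewrite (proj2 (Nat.ltb_ge i i)) by lia. rewrite (proj2 (Nat.ltb_lt i (S i))) by lia. ring.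
  - destruct (Nat.ltb i K) eqn:H1.
    + apply Nat.ltb_lt in H1. rewrite (proj2 (Nat.ltb_lt i (S K))) by lia. ring.
    + apply Nat.ltb_ge in H1. rewrite (proj2 (Nat.ltb_ge i (S K))) by lia. ring.
Qed.

Lemma Sd_marg vs K i : length vs = K -> (0 < sumV vs)%nat -> (i < K)%nat ->
  forall n phi, Sl vs (draw_seqs K n) (fun s => phi (vtilde s i)) = Lq (qc vs i) n phi.
Proof.
  intros HK HV Hi n. induction n; intros phi.
  - unfold Sl; simpl. ring.
  - rewrite Sd_S.
    rewrite (fsum_ext K _ (fun c => qc vs c * (if Nat.eq_dec c i then Lq (qc vs i) n (fun k => phi (S k)) else Lq (qc vs i) n phi))).
    + rewrite fsum_sel. rewrite (proj2 (Nat.ltb_lt i K)) by lia. rewrite <- HK, fsum_qc by auto.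
      simpl. ring.
    + intros c _. f_equal. destruct (Nat.eq_dec c i) as [E|E].
      * rewrite <- IHn. apply Sl_ext. intros s. unfold vtilde. simpl.
        destruct (Nat.eq_dec c i); [reflexivity|contradiction].
      * rewrite <- IHn. apply Sl_ext. intros s. unfold vtilde. simpl.
        destruct (Nat.eq_dec c i); [contradiction|reflexivity].
Qed.

Lemma Wplus_fsum K j s : INR (Wplus K j s) = fsum K (fun i => if Nat.leb j (vtilde s i) then 1 else 0).
Proof.
  unfold Wplus. induction K; [reflexivity|].
  rewrite seq_S, filter_app, length_app, plus_INR, IHK. simpl.
  destruct (Nat.leb j (vtilde s K)); simpl; ring.
Qed.

Lemma condE_eq p K j vs : length vs = K -> (0 < sumV vs)%nat ->
  condE_Wplus p K j vs = fsum K (fun i => Lq (qc vs i) (ndraws p vs) (fun k => if Nat.leb j k then 1 else 0)).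
Proof.
  intros HK HV. unfold condE_Wplus.
  change (fold_right Rplus 0 (map (fun s => draw_prob vs s * INR (Wplus K j s)) (draw_seqs K (ndraws p vs))))
    with (Sl vs (draw_seqs K (ndraws p vs)) (fun s => INR (Wplus K j s))).
  rewrite (Sl_ext _ _ _ _ (Wplus_fsum K j)). rewrite Sl_fsum.
  apply fsum_ext. intros i Hi.
  apply (Sd_marg vs K i HK HV Hi (ndraws p vs) (fun k => if Nat.leb j k then 1 else 0)).
Qed.
Lemma Int_part_INR m : Int_part (INR m) = Z.of_nat m.
Proof.
  unfold Int_part. rewrite <- (tech_up (INR m) (Z.of_nat m + 1)).
  - ring.
  - rewrite plus_IZR, <- INR_IZR_INZ. simpl. lra.
  - rewrite plus_IZR, <- INR_IZR_INZ. simpl. lra.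
Qed.

Lemma ndraws_eq p vs m : p * INR (sumV vs) = INR m -> INR (ndraws p vs) = p * INR (sumV vs).
Proof.
  intros H. unfold ndraws. rewrite H, Int_part_INR, Nat2Z.id. auto.
Qed.

Lemma Un_cv_S U l : Un_cv U l -> Un_cv (fun N => U (S N)) l.
Proof. intros H e He. destruct (H e He) as [N HN]. exists N. intros n Hn. apply HN. lia. Qed.

Lemma inf_sum_shift1 u l : infinite_sum u l -> infinite_sum (fun m => u (S m)) (l - u 0%nat).
Proof.
  intros H. unfold infinite_sum.
  apply (Un_cv_ext (fun N => sum_f_R0 u (S N) - u 0%nat)).
  - intros N. induction N; simpl in *; [ring|]. rewrite <- IHN. ring.
  - apply CV_minus; [apply Un_cv_S; apply H|apply cv_const].
Qed.

Lemma inf_sum_shift u l j : infinite_sum u l -> infinite_sum (fun m => u (j + m)%nat) (l - fsum j u).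
Proof.
  intros H. induction j; simpl.
  - replace (l - 0) with l by ring. auto.
  - apply inf_sum_shift1 in IHj. simpl in IHj.
    replace (l - (fsum j u + u j)) with (l - fsum j u - u (j + 0)%nat) by (rewrite Nat.add_0_r; ring).
    eapply inf_sum_ext; [|exact IHj]. intros m; simpl. f_equal. lia.
Qed.

Lemma Pt_range lam j : 0 <= lam -> 0 <= Pt lam j <= 1.
Proof.
  intros H. unfold Pt. pose proof (fsum_le1 lam j H).
  pose proof (fsum_nonneg j (poi lam) (fun i => poi_nonneg lam i H)). lra.
Qed.

Lemma bnd_fsum pi K M (F : nat -> list nat -> R) B :
  (forall i, bnd pi K (F i) B) -> bnd pi K (fun vs => fsum M (fun i => F i vs)) (INR M * B).
Proof.
  intros HF. induction M; intros vs Hl Hs; cbn [fsum].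
  - rewrite Rabs_R0; simpl; lra.
  - eapply Rle_trans; [apply Rabs_triang|]. rewrite S_INR.
    specialize (IHM vs Hl Hs). specialize (HF M vs Hl Hs). lra.
Qed.

Lemma fsum_const M c : fsum M (fun _ => c) = INR M * c.
Proof. induction M; simpl fsum; [simpl; ring|]. rewrite IHM, S_INR. ring. Qed.

Lemma fsum_abs M F G : (forall i, (i < M)%nat -> Rabs (F i) <= G i) -> Rabs (fsum M F) <= fsum M G.
Proof.
  induction M; intros H; simpl. rewrite Rabs_R0; lra.
  eapply Rle_trans; [apply Rabs_triang|]. apply Rplus_le_compat; auto.
Qed.

Lemma nth_le_sumV vs i : (nth i vs 0%nat <= sumV vs)%nat.
Proof.
  revert i; induction vs; intros [|i]; simpl; unfold sumV in *; simpl; try lia.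
  specialize (IHvs i). lia.
Qed.

Definition Gf (p : R) (a b : nat) : R := Rmin (p * INR a) 1 * (INR a / INR b).

Lemma Gf_range p a b : 0 < p -> (a <= b)%nat -> 0 <= Gf p a b <= 1.
Proof.
  intros Hp Hab. unfold Gf.
  assert (0 <= Rmin (p * INR a) 1 <= 1).
  { split. apply Rmin_glb; [apply Rmult_le_pos; [lra|apply pos_INR]|lra]. apply Rmin_r. }
  destruct (Nat.eq_dec b 0) as [E|E].
  - subst. replace a with 0%nat by lia. simpl. unfold Rdiv; rewrite Rmult_0_l, Rmult_0_r. lra.
  - assert (0 < INR b) by (apply lt_0_INR; lia).
    assert (0 <= INR a / INR b <= 1).
    { split. unfold Rdiv; apply Rmult_le_pos; [apply pos_INR|left; apply Rinv_0_lt_compat; auto].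
      apply div_le; auto. rewrite Rmult_1_l. apply le_INR; auto. }
    nra.
Qed.

Lemma supp_nth_pos pi vs i : pi 0%nat = 0 -> supp pi vs -> (i < length vs)%nat -> (1 <= nth i vs 0%nat)%nat.
Proof.
  intros H0 Hs. revert i. induction Hs; intros i Hi; simpl in *; [lia|].
  destruct i.
  - destruct x; [rewrite H0 in H; lra|lia].
  - apply IHHs. lia.
Qed.

Lemma pointwise p K j vs : 0 < p < 1 -> (1 <= K)%nat -> length vs = K ->
  (forall i, (i < K)%nat -> (1 <= nth i vs 0%nat)%nat) ->
  (exists m, p * INR (sumV vs) = INR m) ->
  Rabs (condE_Wplus p K j vs - fsum K (fun i => Pt (p * INR (nth i vs 0%nat)) j))
    <= fsum K (fun i => Gf p (nth i vs 0%nat) (sumV vs)).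
Proof.
  intros Hp HK Hl Hpos [m Hm].
  assert (HV : (0 < sumV vs)%nat).
  { pose proof (nth_le_sumV vs 0). pose proof (Hpos 0%nat ltac:(lia)). lia. }
  assert (HVr : 0 < INR (sumV vs)) by (apply lt_0_INR; auto).
  pose proof (ndraws_eq p vs m Hm) as HN.
  assert (HN1 : (1 <= ndraws p vs)%nat).
  { destruct (ndraws p vs) eqn:E; [|lia]. simpl in HN. nra. }
  rewrite condE_eq by auto.
  replace (fsum K (fun i => Lq (qc vs i) (ndraws p vs) (fun k => if Nat.leb j k then 1 else 0)) -
    fsum K (fun i => Pt (p * INR (nth i vs 0%nat)) j))
   with (fsum K (fun i => Lq (qc vs i) (ndraws p vs) (fun k => if Nat.leb j k then 1 else 0) -
    Pt (p * INR (nth i vs 0%nat)) j)).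
  2:{ clear. induction K; simpl; [ring|]. rewrite IHK. ring. }
  apply fsum_abs. intros i Hi.
  pose proof (Hpos i Hi) as Hv. pose proof (nth_le_sumV vs i) as Hvle.
  assert (Hvr : 1 <= INR (nth i vs 0%nat)) by (apply (le_INR 1); auto).
  assert (Hq : 0 < qc vs i <= 1).
  { unfold qc. split. apply Rdiv_lt_0_compat; lra. apply div_le; auto. rewrite Rmult_1_l. apply le_INR; auto. }
  assert (Hlam : p * INR (nth i vs 0%nat) = INR (ndraws p vs) * qc vs i).
  { rewrite HN. unfold qc. field. lra. }
  eapply Rle_trans. apply (stein_main (qc vs i) (ndraws p vs) _ j Hq HN1 Hlam).
  unfold Gf. rewrite Rmult_comm. fold (qc vs i). apply Rmult_le_compat_r; [lra|].
  unfold poi. simpl pow. simpl fact. simpl INR.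
  replace (1 / 1 * exp (- (p * INR (nth i vs 0%nat)))) with (exp (- (p * INR (nth i vs 0%nat)))) by field.
  pose proof (exp_ineq1_le (- (p * INR (nth i vs 0%nat)))). pose proof (exp_pos (- (p * INR (nth i vs 0%nat)))).
  apply Rmin_glb; lra.
Qed.
Lemma Qlaw_tail pi p j (H0 : forall n, 0 <= pi n) (H1 : infinite_sum pi 1) : 0 < p ->
  series (fun m => Qlaw pi p (j + m)) = series (fun n => pi n * Pt (p * INR n) j).
Proof.
  intros Hp.
  set (a := fun n m => pi n * poi (p * INR n) (j + m)).
  set (r := fun n => pi n * Pt (p * INR n) j).
  assert (Hlam : forall n, 0 <= p * INR n) by (intros; apply Rmult_le_pos; [lra|apply pos_INR]).
  assert (Ha : forall n m, 0 <= a n m) by (intros; unfold a; apply Rmult_le_pos; auto; apply poi_nonneg; auto).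
  assert (Hr : forall n, infinite_sum (a n) (r n)).
  { intros n; unfold a, r. apply inf_sum_scal. unfold Pt. apply inf_sum_shift. apply poi_sum. }
  destruct (cv_dom pi r 1 1 H1 H0) as [S [HS _]].
  { intros n; unfold r. rewrite Rabs_mult, (Rabs_pos_eq (pi n)) by auto.
    pose proof (Pt_range (p * INR n) j (Hlam n)). rewrite Rabs_pos_eq by lra.
    specialize (H0 n). nra. }
  destruct (tonelli a r S Ha Hr HS) as [c [Hc HcS]].
  rewrite (series_eq r S HS).
  rewrite <- (series_eq c S HcS). f_equal. apply functional_extensionality; intros m.
  unfold Qlaw. apply series_eq. apply Hc.
Qed.

Theorem mainTheorem3 (pi : nat -> R) (K : nat) (p : R)
  (Hpi : is_pos_int_law pi) (HK : (1 <= K)%nat) (Hp : 0 < p < 1)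
  (HpV : forall vs : list nat, length vs = K -> Forall (fun x => 0 < pi x) vs ->
           exists m : nat, p * INR (sumV vs) = INR m) :
  forall j : nat,
    Rabs (E_Wplus pi p K j / INR K - series (fun m => Qlaw pi p (j + m))) <= E_rhs pi p K.
Proof.
  intros j. destruct Hpi as [H0 [Hpi0 H1]].
  set (A := condE_Wplus p K j).
  set (C := fun vs => fsum K (fun i => Pt (p * INR (nth i vs 0%nat)) j)).
  set (D := fun vs => fsum K (fun i => Gf p (nth i vs 0%nat) (sumV vs))).
  set (Qt := series (fun n => pi n * Pt (p * INR n) j)).
  assert (HKr : 0 < INR K) by (apply lt_0_INR; lia).
  assert (HKB : 0 <= INR K * 1) by lra.
  assert (Hm1 : Rabs (-1) = 1) by (rewrite Rabs_left; lra).
  assert (Hpos : forall vs, length vs = K -> supp pi vs -> forall i, (i < K)%nat -> (1 <= nth i vs 0%nat)%nat).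
  { intros vs Hl Hs i Hi. apply (supp_nth_pos pi); auto. lia. }
  assert (HGr : forall vs i, 0 <= Gf p (nth i vs 0%nat) (sumV vs) <= 1).
  { intros vs i. apply Gf_range; [lra|apply nth_le_sumV]. }
  assert (HPtr : forall n, 0 <= Pt (p * INR n) j <= 1).
  { intros n. apply Pt_range. apply Rmult_le_pos; [lra|apply pos_INR]. }
  assert (bA : bnd pi K A (INR K * 1)).
  { intros vs Hl Hs. unfold A. 
    assert (HV : (0 < sumV vs)%nat).
    { pose proof (nth_le_sumV vs 0). pose proof (Hpos vs Hl Hs 0%nat ltac:(lia)). lia. }
    rewrite condE_eq by auto. rewrite <- fsum_const.
    apply fsum_abs. intros i Hi. apply Lq_bound.
    - unfold qc. pose proof (nth_le_sumV vs i). split.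
      + unfold Rdiv; apply Rmult_le_pos; [apply pos_INR|left; apply Rinv_0_lt_compat, lt_0_INR; auto].
      + apply div_le; [apply lt_0_INR; auto|]. rewrite Rmult_1_l; apply le_INR; auto.
    - intros k. destruct (Nat.leb j k); rewrite ?Rabs_R1, ?Rabs_R0; lra. }
  assert (bC : bnd pi K C (INR K * 1)).
  { apply (bnd_fsum pi K K (fun i vs => Pt (p * INR (nth i vs 0%nat)) j)).
    intros i vs _ _. rewrite Rabs_pos_eq; apply HPtr. }
  assert (bD : bnd pi K D (INR K * 1)).
  { apply (bnd_fsum pi K K (fun i vs => Gf p (nth i vs 0%nat) (sumV vs))).
    intros i vs _ _. rewrite Rabs_pos_eq; apply HGr. }
  assert (EC : Eiid pi K C = INR K * Qt).
  { unfold C. rewrite (Eiid_fsum pi H0 H1 K K (fun i vs => Pt (p * INR (nth i vs 0%nat)) j) 1) by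
      (try lra; intros i vs _ _; rewrite Rabs_pos_eq; apply HPtr).
    rewrite <- fsum_const. apply fsum_ext. intros i Hi.
    apply (Eiid_marg pi H0 H1 K i (fun n => Pt (p * INR n) j) 1); auto; try lra.
    intros n _. rewrite Rabs_pos_eq; apply HPtr. }
  assert (ED : Eiid pi K D = INR K * E_rhs pi p K).
  { unfold D. rewrite (Eiid_fsum pi H0 H1 K K (fun i vs => Gf p (nth i vs 0%nat) (sumV vs)) 1) by
      (try lra; intros i vs _ _; rewrite Rabs_pos_eq; apply HGr).
    rewrite <- fsum_const. apply fsum_ext. intros i Hi.
    rewrite (Eiid_exch pi H0 H1 K (Gf p) HGr i Hi).
    unfold E_rhs. apply Eiid_ext; auto. intros vs _ _. unfold Gf. destruct vs; reflexivity. }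
  assert (EAC : Eiid pi K (fun vs => A vs + (-1) * C vs) = Eiid pi K A - Eiid pi K C).
  { rewrite (Eiid_plus pi H0 H1 K A _ (INR K * 1) (INR K * 1)); auto.
    - rewrite (Eiid_scal pi H0 H1 K C (INR K * 1)); auto. ring.
    - intros vs Hl Hs. rewrite Rabs_mult, Hm1, Rmult_1_l. apply bC; auto. }
  assert (bAC : bnd pi K (fun vs => A vs + (-1) * C vs) (INR K * 1 + INR K * 1)).
  { intros vs Hl Hs. eapply Rle_trans; [apply Rabs_triang|]. apply Rplus_le_compat; auto.
    rewrite Rabs_mult, Hm1, Rmult_1_l. apply bC; auto. }
  assert (bmD : bnd pi K (fun vs => (-1) * D vs) (INR K * 1)).
  { intros vs Hl Hs. rewrite Rabs_mult, Hm1, Rmult_1_l. apply bD; auto. }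
  assert (Hpw : forall vs, length vs = K -> supp pi vs -> Rabs (A vs + (-1) * C vs) <= D vs).
  { intros vs Hl Hs. replace (A vs + -1 * C vs) with (A vs - C vs) by ring.
    apply pointwise; auto. }
  assert (HKB2 : 0 <= INR K * 1 + INR K * 1) by lra.
  assert (Hup : Eiid pi K (fun vs => A vs + (-1) * C vs) <= Eiid pi K D).
  { apply (Eiid_le pi H0 H1 K _ _ _ _ HKB2 HKB bAC bD).
    intros vs Hl Hs. pose proof (Hpw vs Hl Hs). apply Rabs_le_inv in H. lra. }
  assert (Hlo : Eiid pi K (fun vs => (-1) * D vs) <= Eiid pi K (fun vs => A vs + (-1) * C vs)).
  { apply (Eiid_le pi H0 H1 K _ _ _ _ HKB HKB2 bmD bAC).
    intros vs Hl Hs. pose proof (Hpw vs Hl Hs). apply Rabs_le_inv in H. lra. }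
  rewrite (Eiid_scal pi H0 H1 K D (INR K * 1)) in Hlo by auto.
  rewrite EAC, EC in Hup, Hlo. rewrite ED in Hup, Hlo.
  rewrite (Qlaw_tail pi p j H0 H1) by lra. fold Qt.
  unfold E_Wplus. fold A.
  apply Rabs_le. split.
  - apply (Rmult_le_reg_r (INR K)); auto.
    replace ((Eiid pi K A / INR K - Qt) * INR K) with (Eiid pi K A - INR K * Qt) by (field; lra). lra.
  - apply (Rmult_le_reg_r (INR K)); auto.
    replace ((Eiid pi K A / INR K - Qt) * INR K) with (Eiid pi K A - INR K * Qt) by (field; lra). lra.
Qed.
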